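(* Let $T\ge 3$ and consider the dynamic panel logit AR(1) model: binary outcomes $Y_0,Y_1,\dots,Y_T\in\{0,1\}$, regressors $X=(X_1,\dots,X_T)\in\mathbb{R}^{K\times T}$, fixed effect $A\in\mathbb{R}$, with, for $t\in\{1,\dots,T\}$, $$\Pr(Y_t=1\mid Y_0,\dots,Y_{t-1},X,A)=\frac{\exp(X_t'\beta_0+Y_{t-1}\gamma_0+A)}{1+\exp(X_t'\beta_0+Y_{t-1}\gamma_0+A)}.$$ For $y_0\in\{0,1\}$, $y=(y_1,\dots,y_T)\in\{0,1\}^T$, $x\in\mathbb{R}^{K\times T}$, $\beta\in\mathbb{R}^K$, $\gamma\in\mathbb{R}$ let $z_t=x_t'\beta+y_{t-1}\gamma$ and $z_{ts}=z_t-z_s$. For $t<s<r$ in $\{1,\dots,T\}$ define $$m^{(a)(t,s,r)}_{y_0}(y,x,\beta,\gamma)=\begin{cases}\exp(z_{ts})&(y_t,y_s,y_r)=(0,1,0),\\ \exp(z_{tr})&(y_t,y_s,y_r)=(0,1,1),\\ -1&(y_t,y_s)=(1,0),\\ \exp(z_{rs})-1&(y_t,y_s,y_r)=(1,1,0),\\0&\text{otherwise},\end{cases}$$ $$m^{(b)(t,s,r)}_{y_0}(y,x,\beta,\gamma)=\begin{cases}\exp(z_{sr})-1&(y_t,y_s,y_r)=(0,0,1),\\ -1&(y_t,y_s)=(0,1),\\ \exp(z_{rt})&(y_t,y_s,y_r)=(1,0,0),\\ \exp(z_{st})&(y_t,y_s,y_r)=(1,0,1),\\0&\text{otherwise}.\end{cases}$$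 Then for all $t<s<r$ in $\{1,\dots,T\}$, all $y_0\in\{0,1\}$, $x\in\mathbb{R}^{K\times T}$, $\alpha\in\mathbb{R}$ and all functions $w:\{0,1\}^{t-1}\to\mathbb{R}$, $$\mathbb{E}\big[w(Y_1,\dots,Y_{t-1})\,m^{(a)(t,s,r)}_{y_0}(Y,X,\beta_0,\gamma_0)\mid Y_0=y_0,X=x,A=\alpha\big]=0,$$ $$\mathbb{E}\big[w(Y_1,\dots,Y_{t-1})\,m^{(b)(t,s,r)}_{y_0}(Y,X,\beta_0,\gamma_0)\mid Y_0=y_0,X=x,A=\alpha\big]=0,$$ where $Y=(Y_1,\dots,Y_T)$.
   Context: The joint distribution of $(Y_0,X,A)$ is unrestricted; only the conditional law of $(Y_1,\dots,Y_T)$ given $(Y_0,X,A)$ is specified by the logit model. Note $z_t$ depends on $y_{t-1}$ (with $y_0$ the initial condition). For $t=1$, $w$ is a constant. *)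

(* Defs.v *)
From HB Require Import structures.
From mathcomp Require Import all_boot all_order all_algebra.
From mathcomp Require Import reals sequences exp.
Set Implicit Arguments. Unset Strict Implicit. Unset Printing Implicit Defensive.
Import Order.TTheory GRing.Theory Num.Theory.
Local Open Scope ring_scope.

Section DynLogit.
Variables (R : realType) (T K : nat).

(* Periods are numbered 1..T; period t corresponds to the ordinal t-1 of 'I_T.
   y_t for t in 0..T: y_0 is the initial condition, y_t = y (t-1) otherwise. *)
Definition yat (y0 : bool) (y : {ffun 'I_T -> bool}) (t : nat) : bool :=
  if t is t'.+1 then
    (match (insub t' : option 'I_T) with Some i => y i | None => false end)
  else y0.

Definition xbeta (x : 'M[R]_(K, T)) (beta : 'cV[R]_K) (t : nat) : R :=
  match (insub t.-1 : option 'I_T) with Some i => \sum_(k < K) x k i * beta k 0 | None => 0 end.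

Definition zt (y0 : bool) (y : {ffun 'I_T -> bool}) (x : 'M[R]_(K, T))
  (beta : 'cV[R]_K) (gamma : R) (t : nat) : R :=
  xbeta x beta t + (yat y0 y t.-1)%:R * gamma.

Definition Lambda (u : R) : R := expR u / (1 + expR u).

(* Pr(Y_1..Y_T = y | Y_0 = y0, X = x, A = alpha) under the logit AR(1) model
   with parameters (beta, gamma) *)
Definition path_prob (beta : 'cV[R]_K) (gamma : R) (y0 : bool)
  (x : 'M[R]_(K, T)) (alpha : R) (y : {ffun 'I_T -> bool}) : R :=
  \prod_(i < T)
    (let p := Lambda (zt y0 y x beta gamma i.+1 + alpha) in
     if y i then p else 1 - p).

Definition cond_exp (beta : 'cV[R]_K) (gamma : R) (y0 : bool)
  (x : 'M[R]_(K, T)) (alpha : R) (f : {ffun 'I_T -> bool} -> R) : R :=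
  \sum_(y : {ffun 'I_T -> bool}) path_prob beta gamma y0 x alpha y * f y.

Definition m_a (t s r : nat) (y0 : bool) (y : {ffun 'I_T -> bool})
  (x : 'M[R]_(K, T)) (beta : 'cV[R]_K) (gamma : R) : R :=
  let z := zt y0 y x beta gamma in
  match yat y0 y t, yat y0 y s, yat y0 y r with
  | false, true, false => expR (z t - z s)
  | false, true, true => expR (z t - z r)
  | true, false, _ => -1
  | true, true, false => expR (z r - z s) - 1
  | _, _, _ => 0
  end.

Definition m_b (t s r : nat) (y0 : bool) (y : {ffun 'I_T -> bool})
  (x : 'M[R]_(K, T)) (beta : 'cV[R]_K) (gamma : R) : R :=
  let z := zt y0 y x beta gamma in
  match yat y0 y t, yat y0 y s, yat y0 y r with
  | false, false, true => expR (z s - z r) - 1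
  | false, true, _ => -1
  | true, false, false => expR (z r - z t)
  | true, false, true => expR (z s - z t)
  | _, _, _ => 0
  end.

Definition hist (t : nat) (y0 : bool) (y : {ffun 'I_T -> bool}) :
  {ffun 'I_t.-1 -> bool} := [ffun i : 'I_t.-1 => yat y0 y i.+1].

End DynLogit.

(* Main.v *)
Require Import Defs.
From HB Require Import structures.
From mathcomp Require Import all_boot all_order all_algebra.
From mathcomp Require Import reals sequences exp.
From mathcomp Require Import zify ring lra.
Import Order.TTheory GRing.Theory Num.Theory.
Set Implicit Arguments. Unset Strict Implicit. Unset Printing Implicit Defensive.
Local Open Scope ring_scope.

Section Aux.
Variables (R : realType) (T K : nat).
Variables (beta : 'cV[R]_K) (gamma : R) (y0 : bool) (x : 'M[R]_(K, T)) (alpha : R).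

Local Notation FT := {ffun 'I_T -> bool}.

Definition agree (k : nat) (y y' : FT) := forall j : 'I_T, (j < k)%N -> y j = y' j.
Definition dep (k : nat) (f : FT -> R) := forall y y', agree k y y' -> f y = f y'.
Definition setf (i : 'I_T) (b : bool) (y : FT) : FT := [ffun j => if j == i then b else y j].
Definition flipf (i : 'I_T) (y : FT) : FT := [ffun j => if j == i then ~~ y j else y j].

Lemma agreeW k k' y y' : agree k y y' -> (k' <= k)%N -> agree k' y y'.
Proof. by move=> H hk j hj; apply: H; lia. Qed.

Lemma yat_ag k y y' n : agree k y y' -> (n <= k)%N -> yat y0 y n = yat y0 y' n.
Proof.
move=> H; case: n => //= n hn; case: insubP => [u _ hu|_] //; apply: H; move: hu => /= hu; lia.
Qed.

Lemma zt_ag k y y' n : agree k y y' -> (n <= k.+1)%N ->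
  zt y0 y x beta gamma n = zt y0 y' x beta gamma n.
Proof. by move=> H hn; rewrite /zt (yat_ag H) //; lia. Qed.

Lemma hist_ag k y y' t : agree k y y' -> (t <= k.+1)%N -> hist t y0 y = hist t y0 y'.
Proof.
move=> H ht; apply/ffunP => j; rewrite !ffunE (yat_ag H) //.
have := ltn_ord j; lia.
Qed.

Lemma set_ag (i : 'I_T) b y : agree i (setf i b y) y.
Proof. move=> j hj; rewrite ffunE; case: eqP => // e; subst; lia. Qed.

Lemma yat_set (i : 'I_T) b y : yat y0 (setf i b y) i.+1 = b.
Proof. by rewrite /= valK ffunE eqxx. Qed.

Definition fac (i : 'I_T) (y : FT) : R :=
  let p := Lambda (zt y0 y x beta gamma i.+1 + alpha) in if y i then p else 1 - p.

Lemma fac_ag (i : 'I_T) y y' : agree i.+1 y y' -> fac i y = fac i y'.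
Proof.
move=> H; rewrite /fac (zt_ag (agreeW H (leqnSn _))) // H //.
Qed.

Lemma fac_set (i : 'I_T) b y : fac i (setf i b y) =
  (let p := Lambda (zt y0 y x beta gamma i.+1 + alpha) in if b then p else 1 - p).
Proof. by rewrite /fac (zt_ag (@set_ag i b y)) // ffunE eqxx. Qed.

Lemma fac_set_sum (i : 'I_T) y : fac i (setf i true y) + fac i (setf i false y) = 1.
Proof. rewrite !fac_set /=; ring. Qed.

Lemma flipfK i : involutive (flipf i).
Proof. by move=> y; apply/ffunP => j; rewrite !ffunE; case: eqP => // ->; rewrite negbK. Qed.

Lemma split_sum (i : 'I_T) (H : FT -> R) :
  (\sum_y H y) *+ 2 = \sum_y (H (setf i true y) + H (setf i false y)).
Proof.
rewrite mulr2n {2}(reindex_inj (inv_inj (flipfK i))) /= -big_split /=.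
apply: eq_bigr => y _.
have E1 : forall b, y i = b -> setf i b y = y.
  by move=> b hb; apply/ffunP => j; rewrite !ffunE; case: eqP => // ->.
have E2 : forall b, y i = b -> setf i (~~ b) y = flipf i y.
  by move=> b hb; apply/ffunP => j; rewrite !ffunE; case: eqP => // ->; rewrite hb.
case hy: (y i).
- by rewrite (E1 true hy) -(E2 true hy).
- by rewrite (E1 false hy) -(E2 false hy) addrC.
Qed.

Definition Pre (k : nat) (y : FT) := \prod_(i < T | (i < k)%N) fac i y.
Definition SumP (f : FT -> R) := \sum_y path_prob beta gamma y0 x alpha y * f y.

Lemma PreT y : Pre T y = path_prob beta gamma y0 x alpha y.
Proof. by rewrite /Pre /path_prob; apply: eq_bigl => i; rewrite ltn_ord. Qed.

Lemma PreS k (hk : (k < T)%N) y : Pre k.+1 y = Pre k y * fac (Ordinal hk) y.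
Proof.
rewrite /Pre (bigD1 (Ordinal hk)) //= mulrC; congr (_ * _).
apply: eq_bigl => i; rewrite -val_eqE /=.
apply/idP/idP => [/andP[h1 /eqP h2]|h]; first lia.
by apply/andP; split; [lia|apply/eqP; lia].
Qed.

Lemma depW k k' f : dep k f -> (k <= k')%N -> dep k' f.
Proof. by move=> H hk y y' A; apply: H; apply: agreeW A hk. Qed.

Lemma Pre_ag k y y' : agree k y y' -> Pre k y = Pre k y'.
Proof.
move=> H; rewrite /Pre; apply: eq_bigr => i hi; apply: fac_ag; apply: agreeW H _; lia.
Qed.

Lemma pre_split k (hk : (k < T)%N) (h : FT -> R) :
  (\sum_y Pre k.+1 y * h y) *+ 2 =
  \sum_y Pre k y * (fac (Ordinal hk) (setf (Ordinal hk) true y) * h (setf (Ordinal hk) true y)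
         + fac (Ordinal hk) (setf (Ordinal hk) false y) * h (setf (Ordinal hk) false y)).
Proof.
rewrite (split_sum (Ordinal hk)); apply: eq_bigr => y _.
rewrite !PreS !(Pre_ag (@set_ag (Ordinal hk) _ y)); ring.
Qed.

Lemma setf_ag2 (i : 'I_T) b y y' : agree i y y' -> agree i.+1 (setf i b y) (setf i b y').
Proof.
move=> H j hj; rewrite !ffunE; case: eqP => // ne; apply: H.
have hne : (nat_of_ord j <> nat_of_ord i) by move=> e; apply: ne; apply: val_inj.
lia.
Qed.

Lemma margL n : forall k, (k + n = T)%N -> forall f, dep k f ->
  \sum_y Pre k y * f y = 2 ^+ n * SumP f.
Proof.
elim: n => [|n IH] k hk f hf.
  have ek : k = T by lia.
  by subst k; rewrite expr0 mul1r /SumP; apply: eq_bigr => y _; rewrite PreT.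
have hkT : (k < T)%N by lia.
have e1 := IH k.+1 ltac:(lia) f (depW hf (leqnSn k)).
have e3 := pre_split hkT f.
have e4 : \sum_y Pre k y * f y = (\sum_y Pre k.+1 y * f y) *+ 2.
  rewrite e3; apply: eq_bigr => y _.
  rewrite !(hf _ y (@set_ag (Ordinal hkT) _ y)) -mulrDl fac_set_sum; ring.
by rewrite e4 e1 exprS mulr2n; ring.
Qed.

Lemma step k (hk : (k < T)%N) (f : FT -> R) : dep k.+1 f ->
  SumP f = SumP (fun y => fac (Ordinal hk) (setf (Ordinal hk) true y) * f (setf (Ordinal hk) true y)
         + fac (Ordinal hk) (setf (Ordinal hk) false y) * f (setf (Ordinal hk) false y)).
Proof.
move=> hf; set g := (fun y => _).
have hg : dep k g.
  move=> y y' A; rewrite /g.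
  have A1 := @setf_ag2 (Ordinal hk) true y y' A.
  have A0 := @setf_ag2 (Ordinal hk) false y y' A.
  by rewrite (hf _ _ A1) (hf _ _ A0) (fac_ag A1) (fac_ag A0).
have e1 := @margL (T - k.+1) k.+1 ltac:(lia) _ hf.
have e2 := @margL (T - k) k ltac:(lia) _ hg.
have e3 := pre_split hk f.
have hne : (2 : R) ^+ (T - k) != 0 by rewrite expf_neq0 // pnatr_eq0.
apply: (mulfI hne); rewrite -e2 -e3 e1.
have -> : (T - k = (T - k.+1).+1)%N by lia.
by rewrite exprS mulr2n; ring.
Qed.
End Aux.

Section Alg.
Variable R : realFieldType.
Implicit Types (a b c A q : R).

Ltac ne0 := apply/lt0r_neq0; rewrite ?addr_gt0 ?mulr_gt0 ?invr_gt0 ?ltr01 //.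

Lemma a_r_tt a b A : 0 < a -> 0 < b -> 0 < A ->
  let p := a * A / (1 + a * A) in p * 0 + (1 - p) * (a / b - 1) = p * (b^-1 + A) / A - 1.
Proof. move=> ha hb hA p; rewrite /p; field; do ?[apply/andP; split]; ne0. Qed.

Ltac fld := field; do ?[apply/andP; split]; ne0.

Lemma a_r_ft et es er A : 0 < et -> 0 < es -> 0 < er -> 0 < A ->
  let p := er * A / (1 + er * A) in
  p * (et / er) + (1 - p) * (et / es) = et * (es^-1 + A) * (1 - p).
Proof. move=> ? ? ? ? p; rewrite /p; fld. Qed.

Lemma a_s_t es A q : 0 < es -> 0 < A ->
  let p := es * A / (1 + es * A) in
  p * (q * (es^-1 + A) / A - 1) + (1 - p) * -1 = q - 1.
Proof. move=> ? ? p; rewrite /p; fld. Qed.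

Lemma a_s_f et es A q : 0 < et -> 0 < es -> 0 < A ->
  let p := es * A / (1 + es * A) in
  p * (et * (es^-1 + A) * (1 - q)) + (1 - p) * 0 = A * et * (1 - q).
Proof. move=> ? ? ? p; rewrite /p; fld. Qed.

Lemma a_t et A q : 0 < et -> 0 < A ->
  let p := et * A / (1 + et * A) in
  p * (q - 1) + (1 - p) * (A * et * (1 - q)) = 0.
Proof. move=> ? ? p; rewrite /p; fld. Qed.

Lemma b_r_ff es er A : 0 < es -> 0 < er -> 0 < A ->
  let p := er * A / (1 + er * A) in
  p * (es / er - 1) + (1 - p) * 0 = A * es - p * (A * es + 1).
Proof. move=> ? ? ? p; rewrite /p; fld. Qed.

Lemma b_r_tf et es er A : 0 < et -> 0 < es -> 0 < er -> 0 < A ->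
  let p := er * A / (1 + er * A) in
  p * (es / et) + (1 - p) * (er / et) = et^-1 * (A^-1 + es) * p.
Proof. move=> ? ? ? ? p; rewrite /p; fld. Qed.

Lemma b_s_f es A q : 0 < es -> 0 < A ->
  let p := es * A / (1 + es * A) in
  p * -1 + (1 - p) * (A * es - q * (A * es + 1)) = - q.
Proof. move=> ? ? p; rewrite /p; fld. Qed.

Lemma b_s_t et es A q : 0 < et -> 0 < es -> 0 < A ->
  let p := es * A / (1 + es * A) in
  p * 0 + (1 - p) * (et^-1 * (A^-1 + es) * q) = q * et^-1 / A.
Proof. move=> ? ? ? p; rewrite /p; fld. Qed.

Lemma b_t et A q : 0 < et -> 0 < A ->
  let p := et * A / (1 + et * A) in
  p * (q * et^-1 / A) + (1 - p) * - q = 0.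
Proof. move=> ? ? p; rewrite /p; fld. Qed.
End Alg.

Section Main.
Variables (R : realType) (T K : nat).
Variables (beta : 'cV[R]_K) (gamma : R) (y0 : bool) (x : 'M[R]_(K, T)) (alpha : R).
Local Notation FT := {ffun 'I_T -> bool}.
Local Notation Sum := (SumP beta gamma y0 x alpha).
Local Notation fac := (fac beta gamma y0 x alpha).
Local Notation agree := (@agree T).
Local Notation dep := (@dep R T).

Lemma Sum_ext f g : (forall y, f y = g y) -> Sum f = Sum g.
Proof. by move=> H; rewrite /SumP; apply: eq_bigr => y _; rewrite H. Qed.

Lemma yat_set' (i : 'I_T) b y n : n = i.+1 -> yat y0 (setf i b y) n = b.
Proof. by move=> ->; apply: yat_set. Qed.

Fixpoint Q (r d : nat) (b : bool) : R :=
  match d with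
  | 0 => Lambda (xbeta x beta r + b%:R * gamma + alpha)
  | d'.+1 => let p := Lambda (xbeta x beta (r - 1 - d') + b%:R * gamma + alpha) in
             p * Q r d' true + (1 - p) * Q r d' false
  end.

Lemma middle s r (Hq : R -> FT -> R) :
  (s < r)%N -> (r <= T)%N -> (1 <= s)%N ->
  (forall q1 q2 p y, p * Hq q1 y + (1 - p) * Hq q2 y = Hq (p * q1 + (1 - p) * q2) y) ->
  (forall q, dep s (Hq q)) ->
  forall d, (d <= r - 1 - s)%N ->
  Sum (fun y => Hq (Q r d (yat y0 y (r - 1 - d))) y) = Sum (fun y => Hq (Q r 0 (yat y0 y (r - 1))) y).
Proof.
move=> hsr hrT hs Haff Hdep; elim=> [|d IH] hd; first by rewrite subn0.
rewrite -IH; last lia.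
have hk : (r - 2 - d < T)%N by lia.
have e1 : (r - 1 - d = (r - 2 - d).+1)%N by lia.
have e2 : (r - 1 - d.+1 = r - 2 - d)%N by lia.
symmetry; rewrite (@step _ _ _ beta gamma y0 x alpha _ hk); last first.
  move=> y y' A; rewrite (Hdep _ _ _ (agreeW A _)); last lia.
  by rewrite (yat_ag y0 A) //; lia.
apply: Sum_ext => y.
set i := Ordinal hk.
rewrite !(@yat_set' i _ _ _ e1) !fac_set /=.
rewrite !(Hdep _ (setf i _ y) y (agreeW (@set_ag _ i _ y) _)) /=; try lia.
rewrite Haff e2 /= e1 /zt /=.
done.
Qed.

Definition A := expR alpha.

Definition Ha t s (q : R) (y : FT) : R :=
  let z := zt y0 y x beta gamma in
  match yat y0 y t, yat y0 y s with
  | true, false => -1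
  | true, true => q * (expR (- z s) + A) / A - 1
  | false, true => expR (z t) * (expR (- z s) + A) * (1 - q)
  | false, false => 0
  end.

Lemma A_gt0 : 0 < A. Proof. exact: expR_gt0. Qed.
Lemma LamE (u : R) : Lambda (u + alpha) = expR u * A / (1 + expR u * A).
Proof. by rewrite /Lambda expRD. Qed.
Lemma expRB' (a b : R) : expR (a - b) = expR a / expR b.
Proof. by rewrite expRD expRN. Qed.
Lemma factw (p wv X Y : R) : p * (wv * X) + (1 - p) * (wv * Y) = wv * (p * X + (1 - p) * Y).
Proof. ring. Qed.

Lemma part_a t s r (w : {ffun 'I_t.-1 -> bool} -> R) :
  (1 <= t)%N -> (t < s)%N -> (s < r)%N -> (r <= T)%N ->
  Sum (fun y => w (hist t y0 y) * m_a t s r y0 y x beta gamma) = 0.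
Proof.
move=> ht hts hsr hrT.
have hk1 : (r.-1 < T)%N by lia.
have er : r = (Ordinal hk1).+1 by rewrite /=; lia.
rewrite (step beta gamma y0 x alpha hk1); last first.
  move=> y y' H; rewrite /= (hist_ag y0 H); last lia.
  rewrite /m_a /= !(yat_ag y0 H); try lia.
  by rewrite !(zt_ag beta gamma y0 x H) //; lia.
transitivity (Sum (fun y => w (hist t y0 y) * Ha t s (Q r 0 (yat y0 y (r-1))) y)).
  apply: Sum_ext => y.
  set i := Ordinal hk1.
  rewrite !(hist_ag y0 (@set_ag _ i _ y)); try (rewrite /=; lia).
  rewrite /m_a /= !(@yat_set' i _ y r er).
  rewrite !(yat_ag y0 (@set_ag _ i _ y)); try (rewrite /=; lia).
  rewrite !(zt_ag beta gamma y0 x (@set_ag _ i _ y)); try (rewrite /=; lia).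
  rewrite !fac_set /= /Ha /=.
  have -> : r.-1.+1 = r by lia.
  have -> : xbeta x beta r + (yat y0 y (r - 1))%:R * gamma = zt y0 y x beta gamma r.
    by rewrite /zt subn1.
  rewrite factw; congr (_ * _).
  rewrite !expRB' !expRN !LamE.
  have h1 := expR_gt0 (zt y0 y x beta gamma t).
  have h2 := expR_gt0 (zt y0 y x beta gamma s).
  have h3 := expR_gt0 (zt y0 y x beta gamma r).
  have h4 := A_gt0.
  case: (yat y0 y t); case: (yat y0 y s).
  - exact: a_r_tt.
  - ring.
  - exact: a_r_ft.
  - ring.
rewrite -(@middle s r (fun q y => w (hist t y0 y) * Ha t s q y) hsr hrT ltac:(lia) _ _ (r-1-s) (leqnn _)); last first.
  move=> q y y' H; rewrite /= (hist_ag y0 H); last lia.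
  rewrite /Ha /= !(yat_ag y0 H); try lia.
  by rewrite !(zt_ag beta gamma y0 x H) //; lia.
  by move=> q1 q2 p y; rewrite /Ha; case: (yat y0 y t); case: (yat y0 y s); ring.
have -> : (r - 1 - (r - 1 - s) = s)%N by lia.
set q := Q r (r - 1 - s) true.
have hks : (s.-1 < T)%N by lia.
have es : s = (Ordinal hks).+1 by rewrite /=; lia.
rewrite (step beta gamma y0 x alpha hks); last first.
  move=> y y' H; rewrite /= (hist_ag y0 H); last lia.
  rewrite /Ha /= !(yat_ag y0 H); try lia.
  by rewrite !(zt_ag beta gamma y0 x H) //; lia.
transitivity (Sum (fun y => w (hist t y0 y) *
   (if yat y0 y t then q - 1 else A * expR (zt y0 y x beta gamma t) * (1 - q)))).
  apply: Sum_ext => y.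
  set i := Ordinal hks.
  rewrite !(hist_ag y0 (@set_ag _ i _ y)); try (rewrite /=; lia).
  rewrite /Ha /= !(@yat_set' i _ y s es).
  rewrite !(yat_ag y0 (@set_ag _ i _ y)); try (rewrite /=; lia).
  rewrite !(zt_ag beta gamma y0 x (@set_ag _ i _ y)); try (rewrite /=; lia).
  rewrite !fac_set /=.
  have -> : s.-1.+1 = s by lia.
  rewrite factw; congr (_ * _).
  rewrite !expRN !LamE.
  have h1 := expR_gt0 (zt y0 y x beta gamma t).
  have h2 := expR_gt0 (zt y0 y x beta gamma s).
  have h4 := A_gt0.
  case: (yat y0 y t).
  - exact: a_s_t.
  - exact: a_s_f.
have hkt : (t.-1 < T)%N by lia.
have et : t = (Ordinal hkt).+1 by rewrite /=; lia.
rewrite (step beta gamma y0 x alpha hkt); last first.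
  move=> y y' H; rewrite /= (hist_ag y0 H); last lia.
  rewrite !(yat_ag y0 H); try lia.
  by rewrite !(zt_ag beta gamma y0 x H) //; lia.
rewrite /SumP big1 // => y _.
set i := Ordinal hkt.
rewrite !(hist_ag y0 (@set_ag _ i _ y)); try (rewrite /=; lia).
rewrite !(@yat_set' i _ y t et).
rewrite !(zt_ag beta gamma y0 x (@set_ag _ i _ y)); try (rewrite /=; lia).
rewrite !fac_set /=.
have -> : t.-1.+1 = t by lia.
rewrite factw !LamE.
have h1 := expR_gt0 (zt y0 y x beta gamma t).
have h4 := A_gt0.
by rewrite a_t // !mulr0.
Qed.
Definition Hb t s (q : R) (y : FT) : R :=
  let z := zt y0 y x beta gamma in
  match yat y0 y t, yat y0 y s with
  | false, false => A * expR (z s) - q * (A * expR (z s) + 1)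
  | false, true => -1
  | true, false => expR (- z t) * (A^-1 + expR (z s)) * q
  | true, true => 0
  end.

Lemma part_b t s r (w : {ffun 'I_t.-1 -> bool} -> R) :
  (1 <= t)%N -> (t < s)%N -> (s < r)%N -> (r <= T)%N ->
  Sum (fun y => w (hist t y0 y) * m_b t s r y0 y x beta gamma) = 0.
Proof.
move=> ht hts hsr hrT.
have hk1 : (r.-1 < T)%N by lia.
have er : r = (Ordinal hk1).+1 by rewrite /=; lia.
rewrite (step beta gamma y0 x alpha hk1); last first.
  move=> y y' H; rewrite /= (hist_ag y0 H); last lia.
  rewrite /m_b /= !(yat_ag y0 H); try lia.
  by rewrite !(zt_ag beta gamma y0 x H) //; lia.
transitivity (Sum (fun y => w (hist t y0 y) * Hb t s (Q r 0 (yat y0 y (r-1))) y)).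
  apply: Sum_ext => y.
  set i := Ordinal hk1.
  rewrite !(hist_ag y0 (@set_ag _ i _ y)); try (rewrite /=; lia).
  rewrite /m_b /= !(@yat_set' i _ y r er).
  rewrite !(yat_ag y0 (@set_ag _ i _ y)); try (rewrite /=; lia).
  rewrite !(zt_ag beta gamma y0 x (@set_ag _ i _ y)); try (rewrite /=; lia).
  rewrite !fac_set /= /Hb /=.
  have -> : r.-1.+1 = r by lia.
  have -> : xbeta x beta r + (yat y0 y (r - 1))%:R * gamma = zt y0 y x beta gamma r.
    by rewrite /zt subn1.
  rewrite factw; congr (_ * _).
  rewrite !expRB' !expRN !LamE.
  have h1 := expR_gt0 (zt y0 y x beta gamma t).
  have h2 := expR_gt0 (zt y0 y x beta gamma s).
  have h3 := expR_gt0 (zt y0 y x beta gamma r).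
  have h4 := A_gt0.
  case: (yat y0 y t); case: (yat y0 y s).
  - ring.
  - exact: b_r_tf.
  - ring.
  - exact: b_r_ff.
rewrite -(@middle s r (fun q y => w (hist t y0 y) * Hb t s q y) hsr hrT ltac:(lia) _ _ (r-1-s) (leqnn _)); last first.
  move=> q y y' H; rewrite /= (hist_ag y0 H); last lia.
  rewrite /Hb /= !(yat_ag y0 H); try lia.
  by rewrite !(zt_ag beta gamma y0 x H) //; lia.
  by move=> q1 q2 p y; rewrite /Hb; case: (yat y0 y t); case: (yat y0 y s); ring.
have -> : (r - 1 - (r - 1 - s) = s)%N by lia.
set q := Q r (r - 1 - s) false.
have hks : (s.-1 < T)%N by lia.
have es : s = (Ordinal hks).+1 by rewrite /=; lia.
rewrite (step beta gamma y0 x alpha hks); last first.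
  move=> y y' H; rewrite /= (hist_ag y0 H); last lia.
  rewrite /Hb /= !(yat_ag y0 H); try lia.
  by rewrite !(zt_ag beta gamma y0 x H) //; lia.
transitivity (Sum (fun y => w (hist t y0 y) *
   (if yat y0 y t then q * (expR (zt y0 y x beta gamma t))^-1 / A else - q))).
  apply: Sum_ext => y.
  set i := Ordinal hks.
  rewrite !(hist_ag y0 (@set_ag _ i _ y)); try (rewrite /=; lia).
  rewrite /Hb /= !(@yat_set' i _ y s es).
  rewrite !(yat_ag y0 (@set_ag _ i _ y)); try (rewrite /=; lia).
  rewrite !(zt_ag beta gamma y0 x (@set_ag _ i _ y)); try (rewrite /=; lia).
  rewrite !fac_set /=.
  have -> : s.-1.+1 = s by lia.
  rewrite factw; congr (_ * _).
  rewrite !expRN !LamE.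
  have h1 := expR_gt0 (zt y0 y x beta gamma t).
  have h2 := expR_gt0 (zt y0 y x beta gamma s).
  have h4 := A_gt0.
  case: (yat y0 y t).
  - exact: b_s_t.
  - exact: b_s_f.
have hkt : (t.-1 < T)%N by lia.
have et : t = (Ordinal hkt).+1 by rewrite /=; lia.
rewrite (step beta gamma y0 x alpha hkt); last first.
  move=> y y' H; rewrite /= (hist_ag y0 H); last lia.
  rewrite !(yat_ag y0 H); try lia.
  by rewrite !(zt_ag beta gamma y0 x H) //; lia.
rewrite /SumP big1 // => y _.
set i := Ordinal hkt.
rewrite !(hist_ag y0 (@set_ag _ i _ y)); try (rewrite /=; lia).
rewrite !(@yat_set' i _ y t et).
rewrite !(zt_ag beta gamma y0 x (@set_ag _ i _ y)); try (rewrite /=; lia).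
rewrite !fac_set /=.
have -> : t.-1.+1 = t by lia.
rewrite factw !LamE.
have h1 := expR_gt0 (zt y0 y x beta gamma t).
have h4 := A_gt0.
by rewrite b_t // !mulr0.
Qed.
End Main.

Theorem proposition1 (R : realType) (T K : nat) (hT : (3 <= T)%N)
  (beta0 : 'cV[R]_K) (gamma0 : R) (t s r : nat)
  (ht : (1 <= t)%N) (hts : (t < s)%N) (hsr : (s < r)%N) (hr : (r <= T)%N)
  (y0 : bool) (x : 'M[R]_(K, T)) (alpha : R)
  (w : {ffun 'I_t.-1 -> bool} -> R) :
  cond_exp beta0 gamma0 y0 x alpha
    (fun y => w (hist t y0 y) * m_a t s r y0 y x beta0 gamma0) = 0 /\
  cond_exp beta0 gamma0 y0 x alpha
    (fun y => w (hist t y0 y) * m_b t s r y0 y x beta0 gamma0) = 0.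
Proof.
split.
- exact: (part_a beta0 gamma0 y0 x alpha w ht hts hsr hr).
- exact: (part_b beta0 gamma0 y0 x alpha w ht hts hsr hr).
Qed.
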